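(* Let $X$ be a real reflexive Banach space and $T:X\rightrightarrows X^{\ast}$ maximally monotone. Then for every $h\in\mathcal{H}(T)$, $\epsilon\ge0$ and $x\in X$, $\breve{T}_h(\epsilon,x)\subset T^{\mathrm{BE}}(\epsilon,x)$; in particular $\breve{T}_{\mathcal{F}_T}(\epsilon,x)\subset T^{\mathrm{BE}}(\epsilon,x)$.
   Context: $X^{\ast}$ is the dual of $X$ with pairing $\langle\cdot,\cdot\rangle$. The dual of $X\times X^{\ast}$ is identified with $X^{\ast}\times X$ via $\langle (x,x^{\ast}),(y^{\ast},y)\rangle=\langle x,y^{\ast}\rangle+\langle y,x^{\ast}\rangle$. $\mathcal{H}(T)$ is the family of lower semicontinuous convex $h:X\times X^{\ast}\to\mathbb{R}\cup\{+\infty\}$ with $h(x,x^{\ast})\ge\langle x,x^{\ast}\rangle$ everywhere and equality whenever $x^{\ast}\in T(x)$. For $\eta\ge0$, $\partial_\eta h(z)$ is the set of $(y^{\ast},y)\in X^{\ast}\times X$ with $h(w,w^{\ast})\ge h(z)+\langle (w,w^{\ast})-z,(y^{\ast},y)\rangle-\eta$ for all $(w,w^{\ast})$ when $h(z)<\infty$, and $\emptyset$ otherwise. $\breve{T}_h(\epsilon,x):=\{x^{\ast}:(x^{\ast},x)\in\partial_{2\epsilon}h(x,x^{\ast})\}$. The Fitzpatrick function is $\mathcal{F}_T(x,x^{\ast})=\sup\{\langle y,x^{\ast}\rangle+\langle x-y,y^{\ast}\rangle:(y,y^{\ast})\in\mathrm{gph}(T)\}$ (it belongs to $\mathcal{H}(T)$).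 $T^{\mathrm{BE}}(\epsilon,x):=\{x^{\ast}: \langle y-x,y^{\ast}-x^{\ast}\rangle\ge-\epsilon\ \forall (y,y^{\ast})\in\mathrm{gph}(T)\}$. *)

(* Defs.v *)
From HB Require Import structures.
From mathcomp Require Import all_boot all_order all_algebra.
From mathcomp Require Import all_classical all_reals all_analysis.
Set Implicit Arguments. Unset Strict Implicit. Unset Printing Implicit Defensive.
Import Order.TTheory GRing.Theory Num.Theory.
Import numFieldNormedType.Exports.
Local Open Scope classical_set_scope.
Local Open Scope ring_scope.

(* Topological dual X^* of a real normed space X: continuous linear functionals.
   The duality pairing <x, x^*> is the evaluation x^* x. *)
Record dual (R : realType) (X : normedModType R) := Dual {
  dfun :> X -> R ;
  dfun_linear : forall (a : R) (u v : X), dfun (a *: u + v) = a * dfun u + dfun v ;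
  dfun_cont : continuous dfun }.

Section defs.
Variables (R : realType) (X : normedModType R).

Definition ddist (f g : dual X) : R :=
  sup [set `|f x - g x| | x in [set x : X | `|x| <= 1]].

Definition dnorm (f : dual X) : R :=
  sup [set `|f x| | x in [set x : X | `|x| <= 1]].

(* X is reflexive: every continuous linear functional on (X^*, ||.||_* ) is the
   evaluation at some point of X (canonical embedding X -> X^** is onto). *)
Definition reflexive_space : Prop :=
  forall phi : dual X -> R,
    (forall (a : R) (f g k : dual X), (forall x, k x = a * f x + g x) ->
        phi k = a * phi f + phi g) ->
    (exists M : R, forall f, `|phi f| <= M * dnorm f) ->
    exists x : X, forall f, phi f = f x.

Definition monotone (T : X -> set (dual X)) : Prop :=
  forall x y (xs ys : dual X), T x xs -> T y ys -> 0 <= ys (y - x) - xs (y - x).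

Definition maximal_monotone (T : X -> set (dual X)) : Prop :=
  monotone T /\
  forall S : X -> set (dual X), monotone S -> (forall x, T x `<=` S x) ->
    forall x, S x = T x.

Definition convex_fun (h : X * dual X -> \bar R) : Prop :=
  forall (z1 z2 z : X * dual X) (l : R), 0 < l < 1 ->
    z.1 = l *: z1.1 + (1 - l) *: z2.1 ->
    (forall x, z.2 x = l * z1.2 x + (1 - l) * z2.2 x) ->
    (h z <= l%:E * h z1 + (1 - l)%:E * h z2)%E.

Definition lsc_fun (h : X * dual X -> \bar R) : Prop :=
  forall (z : X * dual X) (t : \bar R), (t < h z)%E ->
    exists2 d : R, 0 < d & forall w : X * dual X,
      `|w.1 - z.1| < d -> ddist w.2 z.2 < d -> (t < h w)%E.

Definition HT (T : X -> set (dual X)) : set (X * dual X -> \bar R) :=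
  [set h | convex_fun h /\ lsc_fun h /\
           (forall z : X * dual X, ((z.2 z.1)%:E <= h z)%E) /\
           (forall x (xs : dual X), T x xs -> h (x, xs) = (xs x)%:E)].

(* eta-subdifferential; (ys, y) in X^* x X, pairing
   <(w,ws),(ys,y)> = <w,ys> + <y,ws> *)
Definition esubdiff (eta : R) (h : X * dual X -> \bar R) (z : X * dual X)
    : set (dual X * X) :=
  [set p : dual X * X | (h z < +oo)%E /\
     forall w : X * dual X,
       (h z + (p.1 (w.1 - z.1) + (w.2 p.2 - z.2 p.2) - eta)%:E <= h w)%E].

Definition Tbreve (h : X * dual X -> \bar R) (eps : R) (x : X) : set (dual X) :=
  [set xs | esubdiff (2 * eps) h (x, xs) (xs, x)].

Definition fitzpatrick (T : X -> set (dual X)) (z : X * dual X) : \bar R :=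
  ereal_sup [set r | exists (y : X) (ys : dual X),
                      T y ys /\ r = (z.2 y + ys (z.1 - y))%:E].

Definition TBE (T : X -> set (dual X)) (eps : R) (x : X) : set (dual X) :=
  [set xs | forall y (ys : dual X), T y ys -> - eps <= ys (y - x) - xs (y - x)].

End defs.

(* Main.v *)
Require Import Defs.
From HB Require Import structures.
From mathcomp Require Import all_boot all_order all_algebra.
From mathcomp Require Import all_classical all_reals all_analysis.
From mathcomp Require Import lra ring.
Import Order.TTheory GRing.Theory Num.Theory.
Import numFieldNormedType.Exports.
Local Open Scope classical_set_scope.
Local Open Scope ring_scope.
Section S.
Variables (R : realType) (X : normedModType R).
Lemma d0 (f : dual X) : f 0 = 0.
Proof. have := dfun_linear f 1 0 0. rewrite scaler0 addr0 mul1r => h. lra. Qed.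
Lemma dD (f : dual X) u v : f (u + v) = f u + f v.
Proof. by rewrite -[u]scale1r dfun_linear mul1r scale1r. Qed.
Lemma dZ (f : dual X) a u : f (a *: u) = a * f u.
Proof. by rewrite -[a *: u]addr0 dfun_linear d0 addr0. Qed.
Lemma dB (f : dual X) u v : f (u - v) = f u - f v.
Proof. by rewrite dD -scaleN1r dZ mulN1r. Qed.
Definition combf (t : R) (f g : dual X) := fun u => t * f u + (1 - t) * g u.
Lemma comb_lin t f g : forall (a : R) (u v : X), combf t f g (a *: u + v) = a * combf t f g u + combf t f g v.
Proof. move=> a u v; rewrite /combf !dfun_linear; ring. Qed.
Lemma comb_cont t f g : continuous (combf t f g).
Proof. move=> u; rewrite /combf. apply: cvgD; apply: cvgMr; exact: dfun_cont. Qed.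
Definition comb (t : R) (f g : dual X) : dual X :=
  Dual (@comb_lin t f g) (@comb_cont t f g).

Lemma real_key (a V P Q U eps : R) :
  a - V <= 2 * eps + (P - Q - U + V) -> - (P - Q - U + V) <= a - V ->
  - eps <= (P - Q) - (U - V).
Proof. move=> *; lra. Qed.

Lemma part1 (T : X -> set (dual X)) h eps x : HT T h -> 0 <= eps ->
  Tbreve h eps x `<=` TBE T eps x.
Proof.
move=> [hconv [hlsc [hlow hT]]] eps0 xs [hfin hsub] y ys Tyys.
have hy := hT _ _ Tyys.
have hlx := hlow (x, xs).
case E: (h (x, xs)) hfin hlx hsub => [a| |] //= _ hlx hsub. 
rewrite lee_fin in hlx.
have H1 := hsub (y, ys). rewrite hy /= -EFinD lee_fin in H1.
rewrite !dB.
set P := ys y; set Q := ys x; set U := xs y; set V := xs x.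
rewrite !dB -/P -/Q -/U -/V in H1.
apply: (@real_key a V P Q U eps); first lra.
have Ht : forall t, 0 < t < 1 -> 0 <= (a - V) + t * (P - Q - U + V).
  move=> t /andP[t0 t1].
  set w := (t *: y + (1 - t) *: x, comb t ys xs).
  have hc := hconv (y, ys) (x, xs) w t.
  have := hc (ltac:(by apply/andP)) erefl (fun _ => erefl).
  rewrite hy E -!EFinM -EFinD => hc2.
  have := le_trans (hlow w) hc2.
  rewrite lee_fin /= /combf !dD !dZ -/P -/Q -/U -/V => h2.
  have e : (1 - t) * ((a - V) + t * (P - Q - U + V)) =
    (t * P + (1 - t) * a) - (t * (t * P + (1 - t) * Q) + (1 - t) * (t * U + (1 - t) * V)).
    by ring.
  have : 0 <= (1 - t) * ((a - V) + t * (P - Q - U + V)) by rewrite e subr_ge0.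
  by rewrite pmulr_rge0 // subr_gt0.
rewrite -/V in hlx.
rewrite lerNl -subr_ge0.
case: (lerP 0 (P - Q - U + V)) => D0.
  lra.
rewrite leNgt; apply/negP => Hc.
set D := P - Q - U + V in D0 Hc Ht *.
set s := (a - V) / (- D).
have s0 : 0 <= s by rewrite /s divr_ge0 //; lra.
have s1 : s < 1 by rewrite /s ltr_pdivrMr; lra.
have := Ht ((s + 1) / 2) ltac:(apply/andP; split; lra).
have -> : (s + 1) / 2 * D = (- (a - V) + D) / 2.
  rewrite /s; field; lra.
lra.
Qed.

Lemma part2 (T : X -> set (dual X)) eps x : Defs.monotone T -> 0 <= eps ->
  Tbreve (fitzpatrick T) eps x `<=` TBE T eps x.
Proof.
move=> mono eps0 xs [hfin hsub] y ys Tyys.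
have hup : (fitzpatrick T (y, ys) <= (ys y)%:E)%E.
  apply: ub_ereal_sup => r [y' [ys' [Ty' ->]]] /=.
  rewrite lee_fin; have := mono _ _ _ _ Ty' Tyys.
  rewrite !dB; lra.
have hlo : ((xs y + ys (x - y))%:E <= fitzpatrick T (x, xs))%E.
  by apply: ereal_sup_ubound; exists y, ys.
case E: (fitzpatrick T (x, xs)) hfin hlo hsub => [a| |] //= _ hlo hsub.
rewrite lee_fin in hlo.
have H1 := le_trans (hsub (y, ys)) hup. rewrite /= -EFinD lee_fin in H1.
move: hlo H1; rewrite !dB; lra.
Qed.
End S.

Theorem corollary3p3 (R : realType) (X : completeNormedModType R)
    (T : X -> set (dual X)) :
  reflexive_space X -> maximal_monotone T ->
  (forall h, HT T h -> forall (eps : R) (x : X), 0 <= eps ->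
      Tbreve h eps x `<=` TBE T eps x) /\
  (forall (eps : R) (x : X), 0 <= eps ->
      Tbreve (fitzpatrick T) eps x `<=` TBE T eps x).
Proof.
move=> _ [mono _]; split.
- by move=> h hH eps x e0; apply: part1.
- by move=> eps x e0; apply: part2.
Qed.
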